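(* Let $n=2k+1$ with $k$ a positive integer, and let $(\Gamma,+)$ be an abelian group of order $n$ with neutral element $e$ such that $\sum_{g\in\Gamma} g = e$ and $2g\neq e$ for all $g\in\Gamma\setminus\{e\}$. Let $p,q$ be two new symbols and let $P_n=(\Gamma\times(\Gamma\setminus\{e\}))\cup\{p,q\}$. Define the lines - $L_g=\{(h,g): h\in\Gamma\}$ for $g\in\Gamma\setminus\{e\}$; - $l_{p_g}=\{(g,h): h\in\Gamma\setminus\{e\}\}\cup\{p\}$ for $g\in\Gamma$; - $l_{q_g}=\{(h,h+g): h\in\Gamma,\ h+g\neq e\}\cup\{q\}$ for $g\in\Gamma$, and let $\mathcal{L}_n$ be the family of all these $3n-1$ lines. Then the linear system $\mathcal{C}_{n,n+1}=(P_n,\mathcal{L}_n)$ satisfies $\nu_2(\mathcal{C}_{n,n+1})=n+1$.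
   Context: A linear system is a pair $(P,\mathcal{L})$ with $P$ a finite set of points and $\mathcal{L}$ a family of subsets of $P$ (lines) such that any two distinct lines share at most one point. A 2-packing is a set $R$ of lines such that no three distinct lines of $R$ have a common point; $\nu_2$ denotes the maximum cardinality of a 2-packing. *)

(* Defs.v *)
From HB Require Import structures.
From mathcomp Require Import all_boot all_order all_algebra.
Set Implicit Arguments. Unset Strict Implicit. Unset Printing Implicit Defensive.
Import GRing.Theory.
Local Open Scope ring_scope.

Definition is_linear_system (T : finType) (P : {set T}) (L : {set {set T}}) : Prop :=
  (forall l, l \in L -> l \subset P) /\
  (forall l1 l2, l1 \in L -> l2 \in L -> l1 != l2 -> (#|l1 :&: l2| <= 1)%N).

Definition two_packing (T : finType) (R : {set {set T}}) : bool :=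
  [forall l1 in R, forall l2 in R, forall l3 in R,
     [&& l1 != l2, l1 != l3 & l2 != l3] ==> (l1 :&: l2 :&: l3 == set0)].

Definition nu2 (T : finType) (L : {set {set T}}) : nat :=
  \max_(R in powerset L | two_packing R) #|R|.

(* The construction C_{n,n+1}.  Points: inl (h,g) stands for (h,g) in
   Gamma x Gamma, inr true is the new symbol p, inr false is q. *)
Definition pt (G : finZmodType) : finType := ((G * G) + bool)%type.

Definition p_pt (G : finZmodType) : pt G := inr true.
Definition q_pt (G : finZmodType) : pt G := inr false.

Definition Pn (G : finZmodType) : {set pt G} :=
  [set x : pt G | match x with inl (h, g) => g != 0 | inr _ => true end].

Definition Lg (G : finZmodType) (g : G) : {set pt G} :=
  [set (inl (h, g) : pt G) | h : G].

Definition lp (G : finZmodType) (g : G) : {set pt G} :=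
  [set (inl (g, h) : pt G) | h in [set h : G | h != 0]] :|: [set p_pt G].

Definition lq (G : finZmodType) (g : G) : {set pt G} :=
  [set (inl (h, h + g) : pt G) | h in [set h : G | h + g != 0]] :|: [set q_pt G].

Definition Ln (G : finZmodType) : {set {set pt G}} :=
  [set Lg g | g in [set g : G | g != 0]] :|: [set lp g | g : G] :|: [set lq g | g : G].

(* Main.v *)
Require Import Defs.
From HB Require Import structures.
From mathcomp Require Import all_boot all_order all_algebra.
Import GRing.Theory.
From mathcomp Require Import zify.
Local Open Scope ring_scope.

Section M.
Variable G : finZmodType.
Implicit Types g : G.


Lemma inLg g a b : ((inl (a,b) : pt G) \in Lg g) = (b == g).
Proof.
apply/imsetP/eqP => [[h _ [_ ->]] //|->]; by exists a.
Qed.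
Lemma inrLg g c : ((inr c : pt G) \in Lg g) = false.
Proof. by apply/imsetP => -[]. Qed.
Lemma inlp g a b : ((inl (a,b) : pt G) \in lp g) = (a == g) && (b != 0).
Proof.
rewrite /lp in_setU in_set1 /p_pt orbF.
apply/imsetP/andP => [[h]|[/eqP -> hb]]; first by rewrite inE => hh [-> ->].
by exists b; rewrite ?inE.
Qed.
Lemma inrlp g c : ((inr c : pt G) \in lp g) = c.
Proof.
rewrite /lp in_setU in_set1 /p_pt.
have -> : ((inr c : pt G) \in [set (inl (g, h) : pt G) | h in [set h : G | h != 0]]) = false.
  by apply/imsetP => -[].
by case: c.
Qed.
Lemma inlq g a b : ((inl (a,b) : pt G) \in lq g) = (b == a + g) && (b != 0).
Proof.
rewrite /lq in_setU in_set1 /q_pt orbF.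
apply/imsetP/andP => [[h]|[/eqP -> hb]]; first by rewrite inE => hh [-> ->].
by exists a; rewrite ?inE.
Qed.
Lemma inrlq g c : ((inr c : pt G) \in lq g) = ~~ c.
Proof.
rewrite /lq in_setU in_set1 /q_pt.
have -> : ((inr c : pt G) \in [set (inl (h, h + g) : pt G) | h in [set h : G | h + g != 0]]) = false.
  by apply/imsetP => -[].
by case: c.
Qed.

Lemma Lg_neq_lp g g' : Lg g != lp g'.
Proof. by apply/negP => /eqP E; have := inrlp g' true; rewrite -E inrLg. Qed.
Lemma Lg_neq_lq g g' : Lg g != lq g'.
Proof. by apply/negP => /eqP E; have := inrlq g' false; rewrite -E inrLg. Qed.
Lemma lp_neq_lq g g' : lp g != lq g'.
Proof. by apply/negP => /eqP E; have := inrlp g true; rewrite E inrlq. Qed.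
Lemma Lg_inj : injective (@Lg G).
Proof. by move=> g g' E; have := inLg g 0 g; rewrite E eqxx inLg => /eqP. Qed.
Lemma lp_inj (x0 : G) : x0 != 0 -> injective (@lp G).
Proof. move=> hx g g' E; have : (inl (g, x0) : pt G) \in lp g by rewrite inlp eqxx hx.
by rewrite E inlp hx andbT => /eqP. Qed.
Lemma lq_inj (x0 : G) : x0 != 0 -> injective (@lq G).
Proof.
move=> hx g g' E; have : (inl (x0 - g, x0) : pt G) \in lq g by rewrite inlq subrK eqxx hx.
rewrite E inlq hx andbT => /eqP H.
by apply: (addrI (x0 - g)); rewrite subrK -H.
Qed.

Lemma inLn l : l \in Ln G ->
  (exists2 g, g != 0 & l = Lg g) \/ (exists g, l = lp g) \/ (exists g, l = lq g).
Proof.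
rewrite !inE => /orP[/orP[|]|] /imsetP[g hg ->].
- by left; exists g; rewrite inE in hg.
- by right; left; exists g.
- by right; right; exists g.
Qed.

Ltac fin := repeat match goal with
  | H : is_true (_ && _) |- _ => let H1 := fresh in let H2 := fresh in destruct (andP H) as [H1 H2]; clear H
  | H : is_true (_ == _) |- _ => let H1 := fresh in pose proof (elimT eqP H) as H1; clear H
  | H : ?a + ?x = ?a + ?y |- _ => let H1 := fresh in pose proof (addrI _ H) as H1; clear H
  | H : ?x + ?a = ?y + ?a |- _ => let H1 := fresh in pose proof (addIr _ H) as H1; clear H
  | _ => progress subst
  end.

Lemma le1 l1 l2 : l1 \in Ln G -> l2 \in Ln G -> l1 != l2 -> (#|l1 :&: l2| <= 1)%N.
Proof.
move=> /inLn h1 /inLn h2 d; apply/card_le1_eqP => x y; rewrite !inE => /andP[x1 x2] /andP[y1 y2].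
case: h1 d x1 x2 y1 y2 => [[g _ ->]|[[g ->]|[g ->]]]; case: h2 => [[g' _ ->]|[[g' ->]|[g' ->]]] => d;
 case: x => [[a b]|[]]; case: y => [[c e]|[]];
 rewrite ?inLg ?inrLg ?inlp ?inrlp ?inlq ?inrlq //=.
all: (intros; fin; try done; try by rewrite eqxx in d).
Qed.

Lemma three_elems (T : finType) (A : {set T}) : (2 < #|A|)%N ->
  exists a b c, [/\ a \in A, b \in A, c \in A & [&& a != b, a != c & b != c]].
Proof.
move=> hA.
have [a Aa] : exists a, a \in A by apply/card_gt0P; lia.
have hA1 : (1 < #|A :\ a|)%N by move: hA; rewrite (cardsD1 a A) Aa; lia.
have [b Bb] : exists b, b \in A :\ a by apply/card_gt0P; lia.
have hA2 : (0 < #|A :\ a :\ b|)%N by move: hA1; rewrite (cardsD1 b (A :\ a)) Bb; lia.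
have [c Cc] : exists c, c \in A :\ a :\ b by apply/card_gt0P.
move: Bb Cc; rewrite !inE => /andP[ba Ab] /andP[cb /andP[ca Ac]].
by exists a, b, c; split => //; rewrite !(eq_sym a) ba ca (eq_sym b) cb.
Qed.

Lemma tpE (R : {set {set pt G}}) : two_packing R ->
  forall l1 l2 l3 x, l1 \in R -> l2 \in R -> l3 \in R -> l1 != l2 -> l1 != l3 -> l2 != l3 ->
  x \in l1 -> x \in l2 -> x \in l3 -> False.
Proof.
move=> /forallP TP l1 l2 l3 x h1 h2 h3 d12 d13 d23 x1 x2 x3.
have := TP l1; rewrite h1 /= => /forallP/(_ l2); rewrite h2 /= => /forallP/(_ l3).
rewrite h3 d12 d13 d23 /= => /eqP E.
have : x \in l1 :&: l2 :&: l3 by rewrite !inE x1 x2 x3.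
by rewrite E inE.
Qed.

Lemma sumBC (h2 : forall g : G, g != 0 -> g + g != 0) (B C : {set G}) :
  (0 < #|B|)%N -> (0 < #|C|)%N -> (#|B| <= 2)%N -> (#|C| <= 2)%N ->
  (#|B| + #|C| <= #|[set (b + c)%R | b in B, c in C]| + 1)%N.
Proof.
move=> B0 C0 B2 C2.
have [B1|B1] := eqVneq #|B| 1%N.
  have /cards1P[b ->] : #|B| == 1%N by apply/eqP.
  have -> : #|C| = #|[set b + c | c in C]| by rewrite card_imset //; apply: addrI.
  rewrite cards1 addnC leq_add2r; apply: subset_leq_card; apply/subsetP => _ /imsetP[c Cc ->].
  by apply/imset2P; exists b c; rewrite ?inE.
have [C1|C1] := eqVneq #|C| 1%N.
  have /cards1P[c ->] : #|C| == 1%N by apply/eqP.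
  have -> : #|B| = #|[set b + c | b in B]| by rewrite card_imset //; apply: addIr.
  rewrite cards1 leq_add2r; apply: subset_leq_card; apply/subsetP => _ /imsetP[b Bb ->].
  by apply/imset2P; exists b c; rewrite ?inE.
have /cards2P[b1 [b2 [db ->]]] : #|B| == 2%N by rewrite eqn_leq B2; move: B0 B1; case: #|B| => [|[|]].
have /cards2P[c1 [c2 [dc ->]]] : #|C| == 2%N by rewrite eqn_leq C2; move: C0 C1; case: #|C| => [|[|]].
rewrite !cards2 db dc.
set S := [set _ | _ in _, _ in _].
have mS : forall b c : G, b \in [set b1; b2] -> c \in [set c1; c2] -> b + c \in S.
  by move=> b c hb hc; apply/imset2P; exists b c.
have in1 : b1 \in [set b1; b2] by rewrite !inE eqxx.
have in2 : b2 \in [set b1; b2] by rewrite !inE eqxx orbT.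
have jn1 : c1 \in [set c1; c2] by rewrite !inE eqxx.
have jn2 : c2 \in [set c1; c2] by rewrite !inE eqxx orbT.
have le3 : forall x y z : G, x \in S -> y \in S -> z \in S -> x != y -> x != z -> y != z -> (3 <= #|S|)%N.
  move=> x y z xS yS zS dxy dxz dyz.
  have <- : #|x |: (y |: [set z])| = 3%N.
    by rewrite !cardsU1 cards1 !inE negb_or dxy dxz dyz.
  by apply: subset_leq_card; apply/subsetP => w; rewrite !inE => /orP[|/orP[]] /eqP ->.
have ne1 : forall a u v : G, u != v -> a + u != a + v by move=> a u v uv; apply: contraNneq uv => /addrI/eqP.
have ne2 : forall a u v : G, u != v -> u + a != v + a by move=> a u v uv; apply: contraNneq uv => /addIr/eqP.
suff : (3 <= #|S|)%N by rewrite addn1.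
have [E|E] := eqVneq (b1 + c1) (b2 + c2).
  apply: (le3 (b1 + c1) (b1 + c2) (b2 + c1)); rewrite ?mS //.
  - exact: ne1.
  - exact: ne2.
  - apply/eqP => F.
    have : (c2 - c1) + (c2 - c1) == 0.
      apply/eqP.
      have e1 : c2 - c1 = b1 - b2.
        by apply/eqP; rewrite subr_eq -addrA (addrC (-b2)) addrA E addrC addKr.
      have e2 : c2 - c1 = b2 - b1.
        by apply/eqP; rewrite subr_eq -addrA (addrC (-b1)) addrA -F addrC addKr.
      by rewrite {1}e1 e2 addrA subrK subrr.
    by apply/negP/h2; rewrite subr_eq0 eq_sym.
apply: (le3 (b1 + c1) (b1 + c2) (b2 + c2)); rewrite ?mS //.
- exact: ne1.
- exact: ne2.
Qed.

Lemma ub (x0 : G) (hx0 : x0 != 0) (h2 : forall g : G, g != 0 -> g + g != 0)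
  (R : {set {set pt G}}) : R \subset Ln G -> two_packing R -> (#|R| <= #|G| + 1)%N.
Proof.
move=> RL TP; have tp := @tpE R TP.
set X := [set g : G | (g != 0) && (Lg g \in R)].
set B := [set g : G | lp g \in R].
set C := [set g : G | lq g \in R].
have sub : R \subset (@Lg G) @: X :|: (@lp G) @: B :|: (@lq G) @: C.
  apply/subsetP => l lR; have := subsetP RL l lR; move/inLn => [[g g0 E]|[[g E]|[g E]]];
  rewrite -> E in *; rewrite !inE; apply/orP.
  - by left; apply/orP; left; apply/imsetP; exists g; rewrite // inE g0.
  - by left; apply/orP; right; apply/imsetP; exists g; rewrite // inE.
  - by right; apply/imsetP; exists g; rewrite // inE.
have cR : (#|R| <= #|X| + #|B| + #|C|)%N.
  apply: leq_trans (subset_leq_card sub) _.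
  rewrite !cardsU; apply: leq_trans (leq_subr _ _) _.
  apply: leq_add; last exact: leq_imset_card.
  apply: leq_trans (leq_subr _ _) _.
  by apply: leq_add; apply: leq_imset_card.
have cB : (#|B| <= 2)%N.
  rewrite leqNgt; apply/negP => /three_elems [a [b [c [Ba Bb Bc /and3P[dab dac dbc]]]]].
  move: Ba Bb Bc; rewrite !inE => Ba Bb Bc.
  apply: (tp _ _ _ (p_pt G) Ba Bb Bc); rewrite ?inrlp //.
  - by apply: contra dab => /eqP/(@lp_inj x0 hx0)/eqP.
  - by apply: contra dac => /eqP/(@lp_inj x0 hx0)/eqP.
  - by apply: contra dbc => /eqP/(@lp_inj x0 hx0)/eqP.
have cC : (#|C| <= 2)%N.
  rewrite leqNgt; apply/negP => /three_elems [a [b [c [Ba Bb Bc /and3P[dab dac dbc]]]]].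
  move: Ba Bb Bc; rewrite !inE => Ba Bb Bc.
  apply: (tp _ _ _ (q_pt G) Ba Bb Bc); rewrite ?inrlq //.
  - by apply: contra dab => /eqP/(@lq_inj x0 hx0)/eqP.
  - by apply: contra dac => /eqP/(@lq_inj x0 hx0)/eqP.
  - by apply: contra dbc => /eqP/(@lq_inj x0 hx0)/eqP.
set BC := [set (b + c)%R | b in B, c in C].
have hX : X \subset ~: (0%R |: BC).
  apply/subsetP => x; rewrite !inE => /andP[x0' LR]; rewrite negb_or x0' /=.
  apply/imset2P => -[b c Bb Cc E]; rewrite inE in Bb; rewrite inE in Cc.
  apply: (tp _ _ _ (inl (b, x)) LR Bb Cc).
  - exact: Lg_neq_lp.
  - exact: Lg_neq_lq.
  - exact: lp_neq_lq.
  - by rewrite inLg.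
  - by rewrite inlp eqxx.
  - by rewrite inlq E eqxx -E.
have cX : (#|X| + #|0%R |: BC| <= #|G|)%N.
  by rewrite -(cardsC (0%R |: BC)) addnC leq_add2l subset_leq_card.
have c1 : (1 <= #|0%R |: BC|)%N by rewrite -(cards1 (0:G)); apply: subset_leq_card; apply: subsetUl.
have cBC : (#|BC| <= #|0%R |: BC|)%N by rewrite cardsU1 leq_addl.
have [B0|B0] := posnP #|B|; first by lia.
have [C0|C0] := posnP #|C|; first by lia.
have := @sumBC h2 B C B0 C0 cB cC; rewrite -/BC; lia.
Qed.

Definition R0 : {set {set pt G}} :=
  (@Lg G) @: [set g : G | g != 0] :|: [set lp 0; lq 0].

Lemma inR0 l : l \in R0 -> (exists2 g, g != 0 & l = Lg g) \/ l = lp 0 \/ l = lq 0.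
Proof.
rewrite !inE => /orP[/imsetP[g hg ->]|/orP[/eqP->|/eqP->]]; [left|right;left|right;right] => //.
by exists g; rewrite inE in hg.
Qed.

Lemma lp0_notLS : lp 0 \notin (@Lg G) @: [set g : G | g != 0].
Proof. by apply/imsetP => -[g _ E]; move: (Lg_neq_lp g 0); rewrite E eqxx. Qed.
Lemma lq0_notLS : lq 0 \notin (@Lg G) @: [set g : G | g != 0].
Proof. by apply/imsetP => -[g _ E]; move: (Lg_neq_lq g 0); rewrite E eqxx. Qed.

Lemma LgS g : g != 0 -> Lg g \in (@Lg G) @: [set g : G | g != 0].
Proof. by move=> g0; apply: imset_f; rewrite inE. Qed.

Lemma dis l l' x : l \in R0 -> l' \in R0 -> l != l' ->
  (l \in (@Lg G) @: [set g : G | g != 0]) = (l' \in (@Lg G) @: [set g : G | g != 0]) ->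
  x \in l -> x \in l' -> False.
Proof.
move=> R1 R2 d t x1 x2.
case: (@inR0 l R1) => [[g g0 E]|[E|E]]; case: (@inR0 l' R2) => [[g' g0' E']|[E'|E']]; subst l l';
move: t; rewrite ?(negbTE lp0_notLS) ?(negbTE lq0_notLS) ?(LgS _ g0) ?(LgS _ g0') // => _;
move: x1 x2; case: x => [[a b]|[]]; rewrite ?inLg ?inrLg ?inlp ?inrlp ?inlq ?inrlq //=; intros; fin; try done; try by rewrite eqxx in d.
all: by rewrite addr0 eqxx in H0.
Qed.

Lemma R0_tp : two_packing R0.
Proof.
apply/forallP => l1; apply/implyP => h1; apply/forallP => l2; apply/implyP => h2.
apply/forallP => l3; apply/implyP => h3.
apply/implyP; case/and3P => d12 d13 d23.
apply/eqP/setP => x; rewrite !inE; apply/negbTE/negP => /andP[/andP[x1 x2] x3].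
set LS := (@Lg G) @: [set g : G | g != 0].
have [e12|e12] := eqVneq (l1 \in LS) (l2 \in LS); first exact: (@dis l1 l2 x h1 h2 d12 e12 x1 x2).
have [e13|e13] := eqVneq (l1 \in LS) (l3 \in LS); first exact: (@dis l1 l3 x h1 h3 d13 e13 x1 x3).
apply: (@dis l2 l3 x h2 h3 d23 _ x2 x3).
by move: e12 e13; case: (l1 \in LS); case: (l2 \in LS); case: (l3 \in LS).
Qed.

Lemma R0_sub : R0 \subset Ln G.
Proof.
apply/subsetP => l hl; case: (@inR0 l hl) => [[g g0 ->]|[->|->]]; rewrite !inE.
- by rewrite (LgS _ g0).
- by rewrite imset_f ?orbT.
- by rewrite imset_f ?orbT.
Qed.

Lemma R0_card : #|R0| = (#|G| + 1)%N.
Proof.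
rewrite cardsU.
have -> : (@Lg G) @: [set g : G | g != 0] :&: [set lp 0; lq 0] = set0.
  apply/setP => l; rewrite !inE; apply/negbTE/negP => /andP[lS /orP[/eqP E|/eqP E]]; move: lS; rewrite E.
  - by rewrite (negbTE lp0_notLS).
  - by rewrite (negbTE lq0_notLS).
rewrite cards0 subn0 card_imset; last exact: Lg_inj.
rewrite cards2 lp_neq_lq.
have -> : [set g : G | g != 0] = [set~ 0] by apply/setP => g; rewrite !inE.
rewrite cardsC1.
have : (0 < #|G|)%N by apply/card_gt0P; exists 0.
rewrite /=; lia.
Qed.
End M.

Theorem proposition3p2 (k : nat) (G : finZmodType) :
  (0 < k)%N ->
  #|G| = (2 * k + 1)%N ->
  \sum_(g : G) g = 0 ->
  (forall g : G, g != 0 -> g + g != 0) ->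
  is_linear_system (Pn G) (Ln G) /\ nu2 (Ln G) = ((2 * k + 1) + 1)%N.
Proof.
move=> k0 cG _ h2.
have [x0 hx0] : exists x0 : G, x0 != 0%R.
  have : (0 < #|[set~ (0%R:G)]|)%N by rewrite cardsC1 cG; lia.
  by move/card_gt0P => [x]; rewrite !inE => hx; exists x.
split.
  split; last exact: le1.
  move=> l /inLn [[g g0 ->]|[[g ->]|[g ->]]]; apply/subsetP => x; case: x => [[a b]|c];
    rewrite ?inLg ?inrLg ?inlp ?inrlp ?inlq ?inrlq inE //=.
  - by move/eqP ->.
  - by case/andP.
  - by case/andP.
apply/eqP; rewrite eqn_leq; apply/andP; split.
  apply/bigmax_leqP => R /andP[RP TP]; rewrite powersetE in RP; rewrite -cG.
  exact: (@ub G x0 hx0 h2 R RP TP).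
rewrite -cG -R0_card.
apply: leq_bigmax_cond.
by rewrite powersetE R0_sub R0_tp.
Qed.
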